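(* When the segment-based (GK) algorithm described in the context is run, after the deletion step at any time step $t$, the number of type-1 elements stored in QS is $O(\ell\log t)$.
   Context: A stream of elements from a totally ordered universe arrives one by one. Let $\ell=1/\varepsilon$ be an integer. The stream is partitioned into consecutive chunks of $\ell$ elements; time step $t$ is the arrival of the $t$-th chunk, and $t_0(x)$ is the time step in which $x$ arrives. The summary QS stores elements $e_1<\dots<e_s$ seen so far, each with integers $\mathrm{rmin}(e),\mathrm{rmax}(e)$; by convention $\mathrm{rmin}(e_0)=0$. An element $+\infty$, larger than all others, is inserted at the start of the stream and is always stored as $e_s$. Insert$(x)$: let $e_i$ be the smallest stored element with $e_i>x$; set $\mathrm{rmin}(x)=\mathrm{rmin}(e_{i-1})+1$, $\mathrm{rmax}(x)=\mathrm{rmax}(e_i)$, increase $\mathrm{rmin}(e_j),\mathrm{rmax}(e_j)$ by one for all $j\ge i$, and store $x$. Delete$(e_i)$: remove $e_i$, leaving all other values unchanged. Define $g_i=\mathrm{rmin}(e_i)-\mathrm{rmin}(e_{i-1})$ and $\Delta_i=\mathrm{rmax}(e_i)-\mathrm{rmin}(e_i)$. Band values: each element $x$ has an integer $\mathbf{v}(x)$: at time step $t_0(x)$, $\mathbf{v}(x)=0$; at each time step $t>t_0(x)$, if $t$ is a multiple of $2^{\mathbf{v}(x)}$ then $\mathbf{v}(x)$ is increased by one. The segment $\mathrm{seg}(e_i)$ of a stored element $e_i$ is the maximal set of consecutive stored elements $e_j,\dots,e_{i-1}$ all with band value strictly less than $\mathbf{v}(e_i)$; $g^*_i=g_i+\sum_{e_k\in\mathrm{seg}(e_i)}g_k$.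 Algorithm: at each time step $t$: (i) run Insert on each element of the chunk; (ii) (deletion step) while there is a stored $e_i$ ($i<s$) with $\mathbf{v}(e_i)\le\mathbf{v}(e_{i+1})$ and $g^*_i+g_{i+1}+\Delta_{i+1}\le t$, run Delete on $e_i$ and on every element of $\mathrm{seg}(e_i)$. After the deletion step at time $t$, a stored element $e_i$ ($i<s$) is type-1 if $\mathbf{v}(e_i)>\mathbf{v}(e_{i+1})$, and type-2 if it is not type-1 (in which case $g^*_i+g_{i+1}+\Delta_{i+1}>t$). *)

(* Defs.v *)
From mathcomp Require Import all_boot all_order.
Set Implicit Arguments. Unset Strict Implicit. Unset Printing Implicit Defensive.
Import Order.TTheory.
Local Open Scope order_scope.

Fixpoint band (t0 t : nat) : nat :=
  match t with
  | 0 => 0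
  | t'.+1 => if (t <= t0)%N then 0
             else let b := band t0 t' in
                  if (2 ^ b %| t)%N then b.+1 else b
  end.

Section GK.
Context {d : Order.disp_t} {T : orderType d}.

(* A stored element: its key (None = +infinity), its arrival time step,
   rmin and rmax. *)
Record item := Item { key : option T; tin : nat; rmin : nat; rmax : nat }.

Definition dflt : item := Item None 0 0 0.

(* +infinity: inserted at the start of the stream (time step 0), into the
   empty summary: rmin = rmin(e_0) + 1 = 1, rmax = 1. *)
Definition inf_item : item := Item None 0 1 1.

Definition gtk (k : option T) (x : T) : bool :=
  if k is Some a then (x < a)%O else true.

(* Positions are 0-based: position i of the list is e_{i+1} of the paper. *)
Definition nthi (L : seq item) (i : nat) : item := nth dflt L i.

Definition rmin_prev (L : seq item) (i : nat) : nat :=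
  if i is i'.+1 then rmin (nthi L i') else 0.

Definition incr (e : item) : item :=
  Item (key e) (tin e) (rmin e).+1 (rmax e).+1.

Definition insert (x : T) (t0 : nat) (L : seq item) : seq item :=
  let i := find (fun e => gtk (key e) x) L in
  take i L ++ Item (Some x) t0 (rmin_prev L i).+1 (rmax (nthi L i))
          :: map incr (drop i L).

Definition gg (L : seq item) (i : nat) : nat := rmin (nthi L i) - rmin_prev L i.
Definition Delta (L : seq item) (i : nat) : nat := rmax (nthi L i) - rmin (nthi L i).

Definition vb (t : nat) (L : seq item) (i : nat) : nat := band (tin (nthi L i)) t.

(* seg(e_i): maximal run of consecutive elements immediately before position i
   all having band value strictly smaller than that of position i.
   segstart is the position of its first element (= i if empty). *)
Definition seglen (t : nat) (L : seq item) (i : nat) : nat :=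
  find (fun e => ~~ (band (tin e) t < vb t L i)%N) (rev (take i L)).
Definition segstart (t : nat) (L : seq item) (i : nat) : nat := i - seglen t L i.

Definition gstar (t : nat) (L : seq item) (i : nat) : nat :=
  gg L i + \sum_(segstart t L i <= k < i) gg L k.

Definition deletable (t : nat) (L : seq item) (i : nat) : bool :=
  [&& (i.+1 < size L)%N, (vb t L i <= vb t L i.+1)%N &
      (gstar t L i + gg L i.+1 + Delta L i.+1 <= t)%N].

Definition delete_at (t : nat) (L : seq item) (i : nat) : seq item :=
  take (segstart t L i) L ++ drop i.+1 L.

Inductive del_steps (t : nat) : seq item -> seq item -> Prop :=
| del_refl L : del_steps t L L
| del_step L i L' : deletable t L i -> del_steps t (delete_at t L i) L' ->
                    del_steps t L L'.

Definition del_final (t : nat) (L L' : seq item) : Prop :=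
  del_steps t L L' /\ forall i, ~~ deletable t L' i.

(* Step (i) at time step t (1-based): insert the t-th chunk of l elements,
   i.e. stream elements (t-1)*l, ..., t*l - 1 (0-based stream s), in order. *)
Definition insert_chunk (l : nat) (s : nat -> T) (t : nat) (L : seq item) :=
  foldl (fun L k => insert (s k) t L) L (iota ((t.-1) * l) l).

(* run l s t L : L is a possible content of QS after the deletion step of
   time step t (t = 0: just +infinity). *)
Inductive run (l : nat) (s : nat -> T) : nat -> seq item -> Prop :=
| run0 : run l s 0 [:: inf_item]
| runS t L L' : run l s t L -> del_final t.+1 (insert_chunk l s t.+1 L) L' ->
                run l s t.+1 L'.

Definition type1 (t : nat) (L : seq item) (i : nat) : bool :=
  (i.+1 < size L)%N && (vb t L i.+1 < vb t L i)%N.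

Definition num_type1 (t : nat) (L : seq item) : nat :=
  count (type1 t L) (iota 0 (size L)).

End GK.

(* Main.v *)
Require Import Defs.
From mathcomp Require Import all_boot all_order.
From mathcomp Require Import zify.
Set Implicit Arguments. Unset Strict Implicit. Unset Printing Implicit Defensive.

Lemma band_le t0 t : t <= t0 -> band t0 t = 0.
Proof. by case: t => [|t] //= ->. Qed.

Lemma band_S t0 t : t0 <= t ->
  band t0 t.+1 = if 2 ^ band t0 t %| t.+1 then (band t0 t).+1 else band t0 t.
Proof. by move=> h /=; rewrite ltnNge h. Qed.

Lemma band_anti t0 t1 t : t0 <= t1 -> band t1 t <= band t0 t.
Proof.
move=> h; elim: t => [|t IH] //.
case: (leqP t.+1 t1) => h1; first by rewrite band_le.
rewrite !band_S //; last by apply: leq_trans h _.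
case: (ltngtP (band t1 t) (band t0 t)) IH => // [lt _|-> _]; last by case: ifP.
by do 2 case: ifP => _ //; lia.
Qed.

Lemma band_step_mono t0 t1 t : t0 <= t -> t1 <= t ->
  band t0 t <= band t1 t -> band t0 t.+1 <= band t1 t.+1.
Proof.
move=> h0 h1 le; rewrite !band_S //.
case: (ltngtP (band t0 t) (band t1 t)) le => // [lt _|-> _]; last by case: ifP.
by do 2 case: ifP => _ //; lia.
Qed.

Lemma next_mult m q : 0 < q -> exists w, [/\ m < w, w <= m + q & q %| w].
Proof.
move=> q0; exists ((m %/ q).+1 * q); rewrite dvdn_mull // ?dvdnn; rewrite mulSn.
have := divn_eq m q; have := ltn_pmod m q0; set a := m %/ q * q.
by split => //; lia.
Qed.

Lemma dvd_gap q m w : q %| m -> q %| w -> m < w -> m + q <= w.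
Proof.
move=> /dvdnP[a ->] /dvdnP[b ->] lt.
have : a < b by rewrite ltn_mul2r in lt; case/andP: lt.
move=> ab; rewrite -mulSnr leq_mul2r; lia.
Qed.

Lemma band_inv t0 t : t0 <= t ->
  exists m, [/\ t0 <= m <= t, (forall w, m < w <= t -> ~~ (2 ^ band t0 t %| w)),
    m - t0 <= (2 ^ band t0 t).-1 &
    (0 < band t0 t -> (2 ^ (band t0 t).-1 %| m) && (2 ^ (band t0 t).-1 <= m - t0))].
Proof.
elim: t => [|t IH] h.
  have -> : t0 = 0 by lia.
  by exists 0; split => //= w; lia.
case: (leqP t0 t) => lt; last first.
  have e : t0 = t.+1 by lia.
  rewrite e band_le //; exists t.+1; split => //; try lia; move=> w; lia.
have [m [hm1 hm2 hm3 hm4]] := IH lt.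
have p0 : 0 < 2 ^ band t0 t by rewrite expn_gt0.
rewrite band_S //; case: ifP => dv.
- exists t.+1; split; [lia| move=> w; lia | |].
  + have : t.+1 - m <= 2 ^ band t0 t.
      case: (leqP (t.+1 - m) (2 ^ band t0 t)) => // c.
      have [w [w1 w2 w3]] := next_mult m p0.
      by have := hm2 w; rewrite w3; lia.
    rewrite expnS; lia.
  + move=> _; rewrite dv /=.
    case: (posnP (band t0 t)) => b0.
      by rewrite b0; lia.
    have /andP[d1 d2] := hm4 b0.
    have d3 : 2 ^ (band t0 t).-1 %| t.+1.
      apply: dvdn_trans dv; apply: dvdn_exp2l; lia.
    have := dvd_gap d1 d3; have : m < t.+1 by lia.
    have : 2 ^ band t0 t = 2 ^ (band t0 t).-1 + 2 ^ (band t0 t).-1.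
      by rewrite -{1}(prednK b0) expnS mul2n addnn.
    lia.
- exists m; split => //; [lia| ].
  move=> w /andP[w1 w2]; case: (ltngtP w t.+1) w2 => // [w3 _|-> _]; last by rewrite dv.
  by apply: hm2; lia.
Qed.

Lemma band_age_upper t0 t k : t0 <= t -> t - t0 < 2 ^ k.+1 -> band t0 t <= k.+1.
Proof.
move=> h lt; case: (posnP (band t0 t)) => [->//|b0].
have [m [hm1 _ _ hm4]] := band_inv h.
have /andP[_ d2] := hm4 b0.
have : 2 ^ (band t0 t).-1 < 2 ^ k.+1 by lia.
rewrite ltn_exp2l //; lia.
Qed.

Lemma band_age_lower t0 t k : t0 <= t -> 2 ^ k <= t - t0 -> k <= band t0 t.
Proof.
move=> h le.
have [m [hm1 hm2 hm3 _]] := band_inv h.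
have p0 : 0 < 2 ^ band t0 t by rewrite expn_gt0.
have : t - m < 2 ^ band t0 t.
  case: (ltnP (t - m) (2 ^ band t0 t)) => // c.
  have [w [w1 w2 w3]] := next_mult m p0.
  by have := hm2 w; rewrite w3; lia.
move=> h2.
have : 2 ^ k < 2 ^ (band t0 t).+1 by rewrite expnS; lia.
rewrite ltn_exp2l //.
Qed.

Import Order.TTheory.

Section Main.
Context {d : Order.disp_t} {T : orderType d}.
Variable (l : nat) (s : nat -> T).
Local Notation item := (@item d T).
Implicit Types (L : seq item).

Definition keyle (k1 k2 : option T) : bool :=
  match k2 with None => true | Some b => if k1 is Some a then (a <= b)%O else false end.
Definition inr (ki kj : option T) (y : T) : bool :=
  (if ki is Some a then (a <= y)%O else false) && gtk kj y.
Definition Acnt (s0 n : nat) ki kj :=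
  count (fun m => inr ki kj (s m)) (iota (s0 * l) (n - s0 * l)).
Definition Xv L i j := rmax (nthi L j) - rmin (nthi L i).

Lemma keyle_refl k : keyle k k.
Proof. by case: k => //= a. Qed.

Lemma keyle_trans k1 k2 k3 : keyle k1 k2 -> keyle k2 k3 -> keyle k1 k3.
Proof.
case: k3 => // c; case: k2 => // b; case: k1 => // a /= h1 h2.
exact: le_trans h1 h2.
Qed.

Lemma keyle_gtk k1 k2 x : keyle k1 k2 -> gtk k1 x -> gtk k2 x.
Proof.
case: k2 => // b; case: k1 => // a /= h1 h2; exact: lt_le_trans h2 h1.
Qed.

Lemma ngtk_keyle k x : ~~ gtk k x -> keyle k (Some x).
Proof. by case: k => //= a; rewrite -leNgt. Qed.

Lemma gtk_keyle k x : gtk k x -> keyle (Some x) k.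
Proof. by case: k => //= a /ltW. Qed.

Lemma Acnt_mono s0 n : forall ki kj, Acnt s0 n ki kj <= Acnt s0 n.+1 ki kj.
Proof.
move=> ki kj; rewrite /Acnt.
case: (leqP (s0 * l) n) => h.
  have -> : n.+1 - s0 * l = (n - s0 * l).+1 by lia.
  by rewrite -addn1 iotaD count_cat leq_addr.
have -> : n - s0 * l = 0 by lia.
by [].
Qed.

Lemma Acnt_S s0 n ki kj : s0 * l <= n ->
  Acnt s0 n.+1 ki kj = Acnt s0 n ki kj + inr ki kj (s n).
Proof.
move=> h; rewrite /Acnt.
have -> : n.+1 - s0 * l = (n - s0 * l).+1 by lia.
rewrite -addn1 iotaD count_cat /= subnKC // addn0.
by [].
Qed.

Section Ins.
Variables (x : T) (u : nat) (L : seq item).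
Let p := find (fun e => gtk (key e) x) L.
Let xi : item := Item (Some x) u (rmin_prev L p).+1 (rmax (nthi L p)).
Let L' := insert x u L.

Lemma insE : L' = take p L ++ xi :: map incr (drop p L).
Proof. by []. Qed.

Hypothesis pL : p < size L.

Lemma size_ins : size L' = (size L).+1.
Proof.
rewrite insE size_cat /= size_map size_take size_drop pL; lia.
Qed.

Lemma nth_ins q : q <= size L ->
  nthi L' q = if q < p then nthi L q else if q == p then xi else incr (nthi L q.-1).
Proof.
move=> hq; rewrite /nthi insE nth_cat size_take pL.
case: ltnP => h1; first by rewrite nth_take.
case: eqP => [->|ne]; first by rewrite subnn.
have -> : q - p = (q - p).-1.+1 by lia.
rewrite /= (nth_map dflt); last by rewrite size_drop; lia.
by rewrite nth_drop; congr (incr (nth _ _ _)); lia.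
Qed.

Lemma rminp_ins q : q <= size L ->
  rmin_prev L' q = if q <= p then rmin_prev L q
                   else if q == p.+1 then (rmin_prev L p).+1 else (rmin_prev L q.-1).+1.
Proof.
move=> hq; case: q hq => [|q] hq //=.
rewrite nth_ins; last by lia.
case: ltnP => h1 //=.
case: eqP => [->|ne]; first by rewrite eqxx.
have -> : (q.+1 == p.+1) = false by apply/eqP; lia.
by case: q hq h1 ne => [|q] //=; lia.
Qed.

End Ins.

Definition pairP u n L i j :=
  (forall k, i < k < j -> vb u L k < vb u L i /\ vb u L k < vb u L j) ->
  exists s0, [/\ tin (nthi L i) <= s0 /\ tin (nthi L j) <= s0, s0 <= u,
     (s0 * l <= n \/ tin (nthi L i) = u \/ tin (nthi L j) = u),
     (forall k, i < k < j -> s0 < tin (nthi L k)) &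
     Xv L i j <= s0 + 1 + Acnt s0 n (key (nthi L i)) (key (nthi L j))].

Record Inv u n L : Prop := {
  inv_size : 0 < size L;
  inv_last : key (nthi L (size L).-1) = None /\ tin (nthi L (size L).-1) = 0;
  inv_some : forall i, i.+1 < size L -> key (nthi L i) != None;
  inv_sorted : forall i j, i <= j < size L -> keyle (key (nthi L i)) (key (nthi L j));
  inv_rmin : forall i, i < size L -> rmin_prev L i < rmin (nthi L i) <= rmax (nthi L i);
  inv_gd : forall i, i < size L -> rmax (nthi L i) - rmin_prev L i <= maxn u 1;
  inv_tin : forall i, i < size L -> tin (nthi L i) <= u;
  inv_pair : forall i j, i < j < size L -> pairP u n L i j }.

Lemma band_self u : band u u = 0.
Proof. exact: band_le. Qed.

Lemma find_lt_last L : 0 < size L -> key (nthi L (size L).-1) = None ->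
  forall x, find (fun e => gtk (key e) x) L < size L.
Proof.
move=> h0 hl x; rewrite -has_find; apply/(has_nthP dflt); exists (size L).-1.
  by rewrite prednK.
by move: hl; rewrite /nthi => ->.
Qed.

Lemma Inv_ins u n L : 0 < u -> n < u * l -> Inv u n L -> Inv u n.+1 (insert (s n) u L).
Proof.
move=> u0 nl [h0 [hl1 hl2] hsome hsort hrmin hgd htin hpair].
set x := s n.
set p := find (fun e => gtk (key e) x) L.
have pL : p < size L by apply: find_lt_last.
have hp : gtk (key (nthi L p)) x.
  by rewrite /nthi /p; apply: (nth_find dflt (a := fun e => gtk (key e) x)); rewrite has_find.
have hbf : forall q, q < p -> ~~ gtk (key (nthi L q)) x.
  by move=> q hq; rewrite /nthi (before_find dflt hq).
have sz := size_ins u pL.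
have nth' := nth_ins u pL.
have rp' := rminp_ins u pL.
set L' := insert x u L in sz nth' rp' *.
rewrite -/p in nth' rp'.
set xi := Item (Some x) u (rmin_prev L p).+1 (rmax (nthi L p)) in nth' rp'.
have kE q : q <= size L -> key (nthi L' q) =
   if q == p then Some x else key (nthi L (if q < p then q else q.-1)).
  move=> hq; rewrite nth' //; case: ltnP => c; first by rewrite (ltn_eqF c).
  by case: eqP.
have tE q : q <= size L -> tin (nthi L' q) =
   if q == p then u else tin (nthi L (if q < p then q else q.-1)).
  move=> hq; rewrite nth' //; case: ltnP => c; first by rewrite (ltn_eqF c).
  by case: eqP.
have rnE q : q <= size L -> rmin (nthi L' q) =
   if q < p then rmin (nthi L q) else if q == p then (rmin_prev L p).+1 else (rmin (nthi L q.-1)).+1.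
  by move=> hq; rewrite nth' //; case: ifP => //; case: ifP.
have rxE q : q <= size L -> rmax (nthi L' q) =
   if q < p then rmax (nthi L q) else if q == p then rmax (nthi L p) else (rmax (nthi L q.-1)).+1.
  by move=> hq; rewrite nth' //; case: ifP => //; case: ifP.
split.
- by rewrite sz.
- rewrite sz /= nth' // ltnNge (ltnW pL) /=.
  by have -> : (size L == p) = false by apply/eqP; lia.
- move=> q; rewrite sz => hq; rewrite kE; last by lia.
  case: (q =P p) => // ne; apply: hsome; case: ifP => c; lia.
- move=> q1 q2 /andP[h12]; rewrite sz => h2; rewrite !kE; try lia.
  case: (q1 =P p) => e1; case: (q2 =P p) => e2.
  + exact: keyle_refl.
  + apply: keyle_trans (gtk_keyle hp) (hsort _ _ _); case: ifP => c; lia.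
  + case: ifP => c; last lia.
    by apply: ngtk_keyle; apply: hbf.
  + apply: hsort; case: ifP => c1; case: ifP => c2; lia.
- move=> q; rewrite sz => hq; rewrite rp' ?rnE ?rxE; try lia.
  case: (ltngtP q p) => c.
  + have := hrmin q (ltn_trans c pL); repeat case: ifP => ?; lia.
  + have := hrmin p pL; have := hrmin q.-1 ltac:(lia).
    case: (q =P p.+1) => [->|ne] /=; repeat case: ifP => ?; lia.
  + subst q; have := hrmin p pL; repeat case: ifP => ?; lia.
- move=> q; rewrite sz => hq; rewrite rp' ?rxE; try lia.
  have hm : maxn u 1 = u by lia.
  case: (ltngtP q p) => c.
  + have := hgd q (ltn_trans c pL); repeat case: ifP => ?; lia.
  + have := hgd p pL; have := hgd q.-1 ltac:(lia).
    case: (q =P p.+1) => [->|ne] /=; repeat case: ifP => ?; lia.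
  + subst q; have := hgd p pL; repeat case: ifP => ?; lia.
- move=> q; rewrite sz => hq; rewrite tE; last by lia.
  case: ifP => _ //; apply: htin; case: ifP => c; lia.
- move=> q1 q2 /andP[h12]; rewrite sz => h2; rewrite /pairP => Hb.
  have hm : maxn u 1 = u by lia.
  have vE q : q <= size L -> vb u L' q =
     if q == p then 0 else vb u L (if q < p then q else q.-1).
    by move=> hq; rewrite /vb tE //; case: ifP => // _; rewrite band_self.
  case: (boolP ((q1 == p) || (q2 == p))) => hA.
  + have e2 : q2 = q1.+1.
      case: (ltngtP q2 q1.+1) => // c; first lia.
      have [k1 k2] := Hb q1.+1 ltac:(lia).
      by move: k1 k2; rewrite !vE; try lia; case/orP: hA => /eqP ->; rewrite eqxx.
    subst q2.
    exists u; split => //.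
    * rewrite !tE; try lia.
      by split; case: ifP => // _; apply: htin; case: ifP => c; lia.
    * case/orP: hA => /eqP e; right; [left|right]; rewrite e tE ?eqxx //; lia.
    * move=> k; lia.
    * rewrite /Xv; case/orP: hA => /eqP e.
      - subst q1; rewrite rxE ?rnE; try lia; have := hgd p pL.
        rewrite ltnn eqxx ltnNge leqnSn /=.
        by rewrite (_ : (p.+1 == p) = false); [lia | apply/eqP; lia].
      - have p0 : 0 < p by lia.
        have -> : q1 = p.-1 by lia.
        rewrite prednK // rxE ?rnE; try lia.
        have := hgd p pL; rewrite ltnn eqxx ltn_predL p0 /=.
        by rewrite -[p in rmin_prev L p](prednK p0) /=; lia.
  + move: hA; rewrite negb_or => /andP[/eqP n1 /eqP n2].
    have oiP q : q <= size L -> q <> p -> exists i, [/\ (q < p /\ i = q) \/ (p < q /\ i = q.-1),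
        tin (nthi L' q) = tin (nthi L i), key (nthi L' q) = key (nthi L i) &
        rmin (nthi L' q) = rmin (nthi L i) + (p < q) /\ rmax (nthi L' q) = rmax (nthi L i) + (p < q)].
      move=> hq nq; exists (if q < p then q else q.-1); rewrite tE // kE // rnE // rxE //.
      rewrite (introF eqP nq); case: (ltnP q p) => c.
        by split; [left | | | split; lia].
      have pq : p < q by lia.
      by rewrite pq; split; [right; split | | | split; lia].
    have [i [hi ti ki [rni rxi]]] := oiP q1 ltac:(lia) n1.
    have [j [hj tj kj [rnj rxj]]] := oiP q2 ltac:(lia) n2.
    have ij : i < j < size L by lia.
    have vi : vb u L' q1 = vb u L i by rewrite /vb ti.
    have vj : vb u L' q2 = vb u L j by rewrite /vb tj.
    have [|s0 [[t1 t2] su dis btw hX]] := hpair i j ij.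
      move=> k hk.
      have [k' [hk' ek']] : exists k', q1 < k' < q2 /\ vb u L' k' = vb u L k.
        exists (if k < p then k else k.+1); split.
          by case: ifP => c; lia.
        rewrite /vb tE; last by case: ifP => c; lia.
        have -> : ((if k < p then k else k.+1) == p) = false by apply/eqP; case: ifP => c; lia.
        congr (band (tin (nthi L _)) u); case: (ltnP k p) => c.
          by rewrite c.
        by case: ifP => c'; lia.
      by have := Hb k' hk'; rewrite -vi -vj ek'.
    have bt : q1 < p < q2 -> s0 * l <= n.
      move=> hb; case: dis => [//|dis].
      have [z1 z2] := Hb p hb; move: z1 z2; rewrite vi vj /vb tE ?eqxx ?band_self //; last lia.
      by case: dis => ->; rewrite band_self.
    exists s0; split.
    * by rewrite ti tj.
    * exact: su.
    * by rewrite ti tj; case: dis => [h|]; [left; lia | right].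
    * move=> k hk; rewrite tE; last lia.
      case: (k =P p) => [ek|nk].
        subst k; have := bt hk; case: (leqP u s0) => // c h.
        have : u * l <= s0 * l by rewrite leq_mul2r c orbT.
        lia.
      apply: btw; case: ifP => c3; lia.
    * rewrite ki kj.
      have hX' : Xv L' q1 q2 <= Xv L i j + (q1 < p < q2).
        rewrite /Xv rni rxj.
        case: (ltnP p q1) => c1; case: (ltnP p q2) => c2; try lia.
      case: (boolP (q1 < p < q2)) hX' => hb hX'.
      - rewrite (Acnt_S _ _ (bt hb)).
        have -> : inr (key (nthi L i)) (key (nthi L j)) x.
          apply/andP; split.
          + have := hbf i ltac:(lia).
            have := hsome i ltac:(lia).
            by case: (key (nthi L i)) => //= a _; rewrite -leNgt.
          + apply: keyle_gtk hp; apply: hsort; lia.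
        lia.
      - have := Acnt_mono s0 n (key (nthi L i)) (key (nthi L j)). lia.
Qed.

Lemma Inv_time u L : 0 < u -> Inv u.-1 (u.-1 * l) L -> Inv u (u.-1 * l) L.
Proof.
move=> u0 [h0 hl hsome hsort hrmin hgd htin hpair]; split => //.
- move=> i hi; have := hgd i hi; lia.
- move=> i hi; have := htin i hi; lia.
- move=> i j ij Hb.
  have [|s0 [[t1 t2] su dis btw hX]] := hpair i j ij.
    move=> k hk; have [b1 b2] := Hb k hk.
    have tk : tin (nthi L k) <= u.-1 by apply: htin; lia.
    have ti : tin (nthi L i) <= u.-1 by apply: htin; lia.
    have tj : tin (nthi L j) <= u.-1 by apply: htin; lia.
    rewrite /vb in b1 b2 *; rewrite -(prednK u0) in b1 b2.
    split; rewrite ltnNge; apply/negP => c.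
    + by have := band_step_mono ti tk c; rewrite leqNgt b1.
    + by have := band_step_mono tj tk c; rewrite leqNgt b2.
  exists s0; split => //; first lia.
  by left; rewrite leq_mul2r su orbT.
Qed.

Lemma Inv_chunk_aux u n0 m L : 0 < u -> n0 + m <= u * l -> Inv u n0 L ->
  Inv u (n0 + m) (foldl (fun L k => insert (s k) u L) L (iota n0 m)).
Proof.
move=> u0; elim: m n0 L => [|m IH] n0 L h hI; first by rewrite addn0.
rewrite /= -addSnnS; apply: IH; first lia.
apply: Inv_ins => //; lia.
Qed.

Lemma Inv_chunk u L : 0 < u -> Inv u.-1 (u.-1 * l) L -> Inv u (u * l) (insert_chunk l s u L).
Proof.
move=> u0 hI; rewrite /insert_chunk.
have -> : u * l = u.-1 * l + l by rewrite -mulSnr prednK.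
apply: Inv_chunk_aux => //; first by rewrite -mulSnr prednK.
exact: Inv_time.
Qed.

Lemma seg_spec u L m : m < size L ->
  [/\ segstart u L m <= m,
      (forall k, segstart u L m <= k < m -> vb u L k < vb u L m) &
      (0 < segstart u L m -> vb u L m <= vb u L (segstart u L m).-1)].
Proof.
move=> hm; rewrite /segstart /seglen.
set P := fun e : item => ~~ (band (tin e) u < vb u L m).
have sz : size (rev (take m L)) = m by rewrite size_rev size_take hm.
have nr j : j < m -> nth dflt (rev (take m L)) j = nthi L (m - j.+1).
  move=> hj; rewrite nth_rev; last by rewrite size_take hm.
  by rewrite size_take hm nth_take; [|lia].
have fl : find P (rev (take m L)) <= m by rewrite -{2}sz find_size.
split; first lia.
- move=> k hk.
  have := before_find dflt (a := P) (s := rev (take m L)) (i := m - k.+1) ltac:(lia).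
  rewrite nr; last lia.
  have -> : m - (m - k.+1).+1 = k by lia.
  by rewrite /P /vb => /negbFE.
- move=> h.
  have hf : find P (rev (take m L)) < size (rev (take m L)) by rewrite sz; lia.
  have := nth_find dflt (a := P) (s := rev (take m L)); rewrite has_find => /(_ hf).
  rewrite nr; last lia.
  have -> : m - (find P (rev (take m L))).+1 = (m - find P (rev (take m L))).-1 by lia.
  by rewrite /P /vb -leqNgt.
Qed.

Lemma rminp_mono L a b : (forall i, i < size L -> rmin_prev L i < rmin (nthi L i)) ->
  a <= b <= size L -> rmin_prev L a <= rmin_prev L b.
Proof.
move=> hr /andP[ab bs]; elim: b ab bs => [|b IH] ab bs; first by have -> : a = 0 by lia.
case: (ltngtP a b.+1) ab => // [lt _|-> _] //.
have := IH ltac:(lia) ltac:(lia); have := hr b ltac:(lia).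
by case: b {IH lt bs} => [|b] /=; lia.
Qed.

Lemma sum_gg L a b : (forall i, i < size L -> rmin_prev L i < rmin (nthi L i)) ->
  a <= b <= size L -> \sum_(a <= k < b) gg L k = rmin_prev L b - rmin_prev L a.
Proof.
move=> hr /andP[ab bs]; elim: b ab bs => [|b IH] ab bs.
  have -> : a = 0 by lia.
  by rewrite big_geq.
case: (ltngtP a b.+1) ab => // [lt _|-> _]; last by rewrite big_geq // subnn.
rewrite big_nat_recr /=; last lia.
rewrite IH; try lia.
have := rminp_mono hr (a := a) (b := b) ltac:(lia).
have := hr b ltac:(lia).
rewrite /gg; case: b {IH lt bs} => [|b] /=; lia.
Qed.


Lemma gstar_id u L m : (forall i, i < size L -> rmin_prev L i < rmin (nthi L i) <= rmax (nthi L i)) ->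
  m.+1 < size L ->
  gstar u L m + gg L m.+1 + Delta L m.+1 = rmax (nthi L m.+1) - rmin_prev L (segstart u L m).
Proof.
move=> hr hm.
have hr' : forall i, i < size L -> rmin_prev L i < rmin (nthi L i).
  by move=> i hi; case/andP: (hr i hi).
have [st1 _ _] := seg_spec u (ltnW hm).
rewrite /gstar.
have -> : gg L m + \sum_(segstart u L m <= k < m) gg L k = \sum_(segstart u L m <= k < m.+1) gg L k.
  by rewrite big_nat_recr //= addnC.
rewrite sum_gg //; last lia.
have := rminp_mono hr' (a := segstart u L m) (b := m.+1) ltac:(lia).
have := hr m.+1 hm.
rewrite /gg /Delta /=; lia.
Qed.

Section Del.
Variables (u m : nat) (L : seq item).
Local Notation st := (segstart u L m).
Local Notation L' := (delete_at u L m).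
Hypothesis hm : m.+1 < size L.
Lemma hst : st <= m.
Proof. by case: (seg_spec u (ltnW hm)). Qed.

Definition fdel q := if q < st then q else q + (m.+1 - st).

Lemma size_del : size L' = size L - (m.+1 - st).
Proof. rewrite /delete_at size_cat size_take size_drop; have := hst; case: ifP; lia. Qed.

Lemma nth_del q : nthi L' q = nthi L (fdel q).
Proof.
rewrite /delete_at /nthi /fdel nth_cat size_take.
have -> : (if st < size L then st else size L) = st by case: ifP => //; have := hst; lia.
case: ifP => c; first by rewrite nth_take.
by rewrite nth_drop; congr nth; have := hst; lia.
Qed.

Lemma rminp_del q : rmin_prev L' q = if q == st then rmin_prev L st else rmin_prev L (fdel q).
Proof.
case: q => [|q] /=.
  case: eqP => [<-|ne] //; rewrite /fdel; have -> : 0 < st by lia.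
  by [].
rewrite nth_del /fdel; case: eqP => [e|ne].
  rewrite -e /=; case: ifP => //; lia.
case: ifP => c; case: ifP => c'; try lia.
  by [].
rewrite addSn /=; congr (rmin (nthi L _)); lia.
Qed.

End Del.


Lemma Inv_del u L m : Inv u (u * l) L -> deletable u L m -> Inv u (u * l) (delete_at u L m).
Proof.
move=> [h0 [hl1 hl2] hsome hsort hrmin hgd htin hpair] /and3P[hm hv hc].
have [st1 st2 st3] := seg_spec u (ltnW hm).
set st := segstart u L m in st1 st2 st3.
have hid := gstar_id u hrmin hm; rewrite -/st in hid.
have sz := size_del u hm; rewrite -/st in sz.
have nth' := nth_del u hm; rewrite -/st in nth'.
have rp' := rminp_del u hm; rewrite -/st in rp'.
have hr' : forall i, i < size L -> rmin_prev L i < rmin (nthi L i).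
  by move=> i hi; case/andP: (hrmin i hi).
set L' := delete_at u L m in sz nth' rp' *.
have fE q : fdel u m L q = if q < st then q else q + (m.+1 - st) by [].
have fbd q : q < size L' -> fdel u m L q < size L by rewrite fE sz; case: ifP; lia.
split.
- by rewrite sz; lia.
- rewrite nth' fE sz; case: ifP => c; first lia.
  by have -> : (size L - (m.+1 - st)).-1 + (m.+1 - st) = (size L).-1 by lia.
- move=> q hq; rewrite nth'; apply: hsome; move: hq; rewrite fE sz; case: ifP; lia.
- move=> q1 q2 /andP[h12 h2]; rewrite !nth'; apply: hsort.
  move: h2; rewrite !fE sz; case: ifP => c1; case: ifP => c2; lia.
- move=> q hq; rewrite rp' nth'; case: eqP => [e|ne].
    have e' : fdel u m L q = m.+1 by rewrite fE e ltnn; lia.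
    rewrite e'; have := rminp_mono hr' (a := st) (b := m.+1) ltac:(lia).
    have := hrmin m.+1 hm; lia.
  exact: hrmin (fbd q hq).
- move=> q hq; rewrite rp' nth'; case: eqP => [e|ne].
    have e' : fdel u m L q = m.+1 by rewrite fE e ltnn; lia.
    rewrite e' -hid; lia.
  exact: hgd (fbd q hq).
- by move=> q hq; rewrite nth'; apply: htin; apply: fbd.
- move=> q1 q2 /andP[h12 h2] Hb.
  set i := fdel u m L q1; set j := fdel u m L q2.
  have ij : i < j < size L by rewrite /i /j !fE; move: h2; rewrite sz; case: ifP => c1; case: ifP => c2; lia.
  have vq q : vb u L' q = vb u L (fdel u m L q) by rewrite /vb nth'.
  have Xq : Xv L' q1 q2 = Xv L i j by rewrite /Xv !nth'.
  case: (boolP (all (fun k => (vb u L k < vb u L i) && (vb u L k < vb u L j)) (iota i.+1 (j - i.+1)))) => hall.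
  + have [|s0 [[t1 t2] su dis btw hX]] := hpair i j ij.
      move=> k hk; have /allP/(_ k) := hall.
      by rewrite mem_iota => /(_ ltac:(lia)) /andP.
    exists s0; split; rewrite ?nth' ?Xq //.
    move=> k hk; rewrite nth'; apply: btw; rewrite /i /j !fE; case: ifP => c1; case: ifP => c2; case: ifP => c3; lia.
  + have [k] := allPn hall; rewrite mem_iota => hk hnk.
    have km : st <= k <= m.
      case: (ltnP k st) => c1.
        have : q1 < k < q2 by move: hk; rewrite /i /j !fE; case: ifP => c2; case: ifP => c3; lia.
        move=> /Hb; rewrite !vq.
        have -> : fdel u m L k = k by rewrite fE c1.
        by rewrite -/i -/j => -[b1 b2]; rewrite b1 b2 in hnk.
      case: (leqP k m) => c2; first lia.
      have : q1 < k - (m.+1 - st) < q2.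
        by move: hk; rewrite /i /j !fE; case: ifP => c3; case: ifP => c4; lia.
      move=> /Hb; rewrite !vq.
      have -> : fdel u m L (k - (m.+1 - st)) = k by rewrite fE; case: ifP => c3; lia.
      by rewrite -/i -/j => -[b1 b2]; rewrite b1 b2 in hnk.
    have vkm : vb u L k <= vb u L m.
      case: (ltngtP k m) => c; [apply: ltnW; apply: st2; lia | lia | by rewrite c].
    have hmin : vb u L i <= vb u L m \/ vb u L j <= vb u L m.
      move: hnk; rewrite negb_and -!leqNgt => /orP[] h; [left|right]; lia.
    have q1s : q1 < st by move: hk km; rewrite /i fE; case: ifP => c; lia.
    have q2s : st <= q2 by move: hk km; rewrite /j fE; case: ifP => c; lia.
    have ei : i = q1 by rewrite /i fE q1s.
    have ej : j = q2 + (m.+1 - st) by rewrite /j fE ltnNge q2s.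
    have e1 : q1 = st.-1.
      case: (ltngtP q1 st.-1) => // c; last lia.
      have [b1 b2] := Hb st.-1 ltac:(lia).
      move: b1 b2; rewrite !vq.
      have -> : fdel u m L st.-1 = st.-1 by rewrite fE; case: ifP; lia.
      rewrite -/i -/j; have := st3 ltac:(lia); lia.
    have e2 : q2 = st.
      case: (ltngtP q2 st) => // c; first lia.
      have [b1 b2] := Hb st ltac:(lia).
      move: b1 b2; rewrite !vq.
      have -> : fdel u m L st = m.+1 by rewrite fE ltnn; lia.
      rewrite -/i -/j; lia.
    exists u; split.
    * by rewrite !nth'; split; apply: htin; apply: fbd; lia.
    * by [].
    * by left.
    * move=> k0; lia.
    * rewrite Xq /Xv ej e2 ei e1.
      have -> : st + (m.+1 - st) = m.+1 by lia.
      have : rmin (nthi L st.-1) = rmin_prev L st by case: (st) q1s => //.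
      lia.
Qed.


Lemma Inv_init : Inv 0 0 [:: inf_item].
Proof.
split => //=.
- move=> i j /andP[a b]; have -> : i = 0 by lia.
  by have -> : j = 0 by lia.
- by move=> i; case: i.
- by move=> i; case: i.
- by move=> i; case: i.
- move=> i j; lia.
Qed.

Lemma Inv_steps u L L' : del_steps u L L' -> Inv u (u * l) L -> Inv u (u * l) L'.
Proof.
elim => [//|L0 i L1 hd _ IH] hI; apply: IH; exact: Inv_del.
Qed.

Lemma Inv_run t L : run l s t L -> Inv t (t * l) L /\ (forall i, ~~ deletable t L i).
Proof.
elim => [|t0 L0 L1 _ [IH _] [hs hnd]].
  by split; [exact: Inv_init | move=> i; rewrite /deletable /=; case: i].
split => //; apply: (Inv_steps hs); apply: Inv_chunk => //.
Qed.


Section Final.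
Variables (t : nat) (L : seq item).
Hypothesis hI : Inv t (t * l) L.
Hypothesis hnd : forall i, ~~ deletable t L i.

Definition cpos i := i.+1 + find (fun e => vb t L i <= band (tin e) t) (drop i.+1 L).

Lemma cpos_spec i : type1 t L i ->
  [/\ i.+1 < cpos i, cpos i < size L, vb t L i <= vb t L (cpos i) &
      forall k, i < k < cpos i -> vb t L k < vb t L i].
Proof.
case: hI => h0 [hl1 hl2] _ _ _ _ _ _ /andP[hi hv].
set P := fun e : item => vb t L i <= band (tin e) t.
have hlast : P (nthi L (size L).-1) by rewrite /P hl2; apply: band_anti.
have szd : size (drop i.+1 L) = size L - i.+1 by rewrite size_drop.
have nd j : nth dflt (drop i.+1 L) j = nthi L (i.+1 + j) by rewrite nth_drop.
have hf : find P (drop i.+1 L) < size L - i.+1.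
  rewrite -szd -has_find; apply/(has_nthP dflt); exists ((size L).-1 - i.+1).
    by rewrite szd; lia.
  by rewrite nd; have -> : i.+1 + ((size L).-1 - i.+1) = (size L).-1 by lia.
have f0 : 0 < find P (drop i.+1 L).
  case: (posnP (find P (drop i.+1 L))) => // e.
  have := nth_find dflt (a := P) (s := drop i.+1 L); rewrite has_find szd e => /(_ ltac:(lia)).
  by rewrite nd addn0 /P -/(vb t L i.+1) leqNgt hv.
rewrite /cpos -/P; split; try lia.
- have := nth_find dflt (a := P) (s := drop i.+1 L); rewrite has_find szd => /(_ hf).
  by rewrite nd.
- move=> k hk; have := before_find dflt (a := P) (s := drop i.+1 L) (i := k - i.+1) ltac:(lia).
  rewrite nd; have -> : i.+1 + (k - i.+1) = k by lia.
  by rewrite /P ltnNge => ->.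
Qed.

Definition good i s0 : bool :=
  [&& tin (nthi L i) <= s0, s0 < t,
      all (fun k => s0 < tin (nthi L k)) (iota i.+1 (cpos i - i.+1)) &
      t - s0 <= Acnt s0 (t * l) (key (nthi L i)) (key (nthi L (cpos i)))].

Definition sf i := find (good i) (iota 0 t).

Lemma good_ex i : type1 t L i -> good i (sf i).
Proof.
move=> ht; have [c1 c2 c3 c4] := cpos_spec ht.
case: hI => h0 [hl1 hl2] hsome hsort hrmin hgd htin hpair.
have [|s0 [[t1 t2] su dis btw hX]] := hpair i (cpos i) ltac:(lia).
  by move=> k hk; have := c4 k hk; lia.
set p := (cpos i).-1.
have hp1 : p.+1 = cpos i by rewrite /p; lia.
have hvp : vb t L p < vb t L i by apply: c4; lia.
have := hnd p; rewrite /deletable hp1 c2 /=.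
have -> : vb t L p <= vb t L (cpos i) by lia.
rewrite /= -ltnNge.
have := gstar_id t hrmin (m := p); rewrite hp1 => /(_ c2) ->.
have [st1 st2 st3] := seg_spec t (m := p) (L := L) ltac:(lia).
have sti : i < segstart t L p.
  case: (ltnP i (segstart t L p)) => // c.
  have := st2 i ltac:(lia); lia.
have := rminp_mono (L := L) (a := i.+1) (b := segstart t L p) _ ltac:(lia).
move=> /(_ (fun j hj => proj1 (andP (hrmin j hj)))) hmono hlt.
have e : rmin_prev L i.+1 = rmin (nthi L i) by [].
rewrite e in hmono.
have tp : s0 < tin (nthi L p) by apply: btw; lia.
have tpt : tin (nthi L p) <= t by apply: htin; lia.
have ex : good i s0.
  apply/and4P; split => //.
  - lia.
  - by apply/allP => k; rewrite mem_iota => hk; apply: btw; lia.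
  - move: hX; rewrite /Xv; lia.
have : has (good i) (iota 0 t) by apply/hasP; exists s0 => //; rewrite mem_iota; lia.
rewrite has_find => hf.
have hf' : sf i < t by move: hf; rewrite size_iota.
have := nth_find 0 (a := good i) (s := iota 0 t); rewrite has_find => /(_ hf).
by rewrite nth_iota // add0n.
Qed.


Lemma chain x y z : type1 t L x -> type1 t L y -> x < y ->
  inr (key (nthi L x)) (key (nthi L (cpos x))) z ->
  inr (key (nthi L y)) (key (nthi L (cpos y))) z -> y < cpos x.
Proof.
move=> hx /andP[hy _] xy /andP[_ g1] /andP[g2 _].
case: (ltnP y (cpos x)) => // c.
have := inv_sorted hI (i := cpos x) (j := y) ltac:(lia).
move: g1 g2; case: (key (nthi L (cpos x))) => [a|] //; case: (key (nthi L y)) => [b|] //= g1 g2 h.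
by have := lt_le_trans g1 (le_trans h g2); rewrite ltxx.
Qed.

Lemma count_big (a : pred nat) r : count a r = \sum_(x <- r) a x.
Proof. by elim: r => [|y r IH]; rewrite ?big_nil ?big_cons //= IH. Qed.

Lemma sum_eq1 (K j : nat) : j < K -> \sum_(k < K) (j == k) = 1.
Proof.
move=> h; rewrite (bigD1 (Ordinal h)) //= eqxx big1 // => k hk.
have : j != k.
  apply: contra hk => /eqP e; apply/eqP; apply: val_inj; by rewrite /= e.
by case: (j == k).
Qed.

Lemma count_part (I : seq nat) (f : nat -> nat) K : all (fun i => f i < K) I ->
  size I = \sum_(k < K) count (fun i => f i == k) I.
Proof.
elim: I => [|a I IH] /=; first by rewrite big1.
move=> /andP[ha hI']; rewrite big_split /= sum_eq1 // -IH //.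
Qed.


Definition Qc i m := (sf i * l <= m) && inr (key (nthi L i)) (key (nthi L (cpos i))) (s m).
Definition kf i := trunc_log 2 (t - sf i).

Lemma good_facts i : type1 t L i ->
  [/\ tin (nthi L i) <= sf i, sf i < t,
      (forall k, i < k < cpos i -> sf i < tin (nthi L k)) &
      t - sf i <= Acnt (sf i) (t * l) (key (nthi L i)) (key (nthi L (cpos i)))].
Proof.
move=> h; have /and4P[g1 g2 /allP g3 g4] := good_ex h; split => //.
by move=> k hk; apply: g3; rewrite mem_iota; lia.
Qed.

Lemma kf_bounds i : type1 t L i -> 2 ^ kf i <= t - sf i < 2 ^ (kf i).+1.
Proof.
move=> h; have [_ g2 _ _] := good_facts h.
by have := trunc_log_bounds (p := 2) (n := t - sf i) isT ltac:(lia).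
Qed.

Lemma chain3 (G : seq nat) k m : sorted ltn G ->
  (forall i, i \in G -> type1 t L i /\ kf i = k) ->
  count (fun i => Qc i m) G <= 3.
Proof.
move=> sG hG; rewrite -size_filter.
set H := [seq i <- G | Qc i m].
have sH : sorted ltn H by apply: sorted_filter => //; exact: ltn_trans.
case: (leqP (size H) 3) => // c.
have inH j : j < size H -> [/\ type1 t L (nth 0 H j), kf (nth 0 H j) = k & Qc (nth 0 H j) m].
  move=> hj; have := mem_nth 0 hj; rewrite mem_filter => /andP[q /hG [h1 h2]]; by split.
have lt j1 j2 : j1 < j2 < size H -> nth 0 H j1 < nth 0 H j2.
  move=> /andP[a b]; apply: (sorted_ltn_nth ltn_trans) => //; rewrite inE; lia.
have [t0 k0 /andP[_ q0]] := inH 0 ltac:(lia).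
have [t1 k1 /andP[_ q1]] := inH 1 ltac:(lia).
have [t2 k2 /andP[_ q2]] := inH 2 ltac:(lia).
have [t3 k3 /andP[_ q3]] := inH 3 ltac:(lia).
have l01 : (nth 0 H 0) < (nth 0 H 1) by apply: lt; lia.
have l12 : (nth 0 H 1) < (nth 0 H 2) by apply: lt; lia.
have l23 : (nth 0 H 2) < (nth 0 H 3) by apply: lt; lia.
have c01 := chain t0 t1 l01 q0 q1.
have c03 := chain t0 t3 (ltn_trans l01 (ltn_trans l12 l23)) q0 q3.
have c12 := chain t1 t2 l12 q1 q2.
have c23 := chain t2 t3 l23 q2 q3.
have [_ _ _ s1] := cpos_spec t1.
have [_ _ _ s2] := cpos_spec t2.
have v21 := s1 (nth 0 H 2) ltac:(lia).
have v32 := s2 (nth 0 H 3) ltac:(lia).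
have [_ _ g0 _] := good_facts t0.
have ta1 := g0 (nth 0 H 1) ltac:(lia).
have [ga1 _ _ _] := good_facts t1.
have [ga3 _ _ _] := good_facts t3.
have b0 := kf_bounds t0; have b3 := kf_bounds t3.
rewrite k0 in b0; rewrite k3 in b3.
have tt1 : tin (nthi L (nth 0 H 1)) <= t by apply: (inv_tin hI); case/andP: t1; lia.
have tt3 : tin (nthi L (nth 0 H 3)) <= t by apply: (inv_tin hI); case/andP: t3; lia.
have u1 := band_age_upper (k := k) tt1 ltac:(lia).
have u3 := band_age_lower (k := k) tt3 ltac:(lia).
rewrite /vb in v21 v32; lia.
Qed.

Lemma group_bound k : 0 < l ->
  count (fun i => kf i == k) [seq i <- iota 0 (size L) | type1 t L i] <= 6 * l.
Proof.
move=> l0; rewrite -size_filter.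
set G := [seq i <- _ | kf i == k].
have hG i : i \in G -> type1 t L i /\ kf i = k.
  by rewrite !mem_filter => /and3P[/eqP -> -> _].
have sG : sorted ltn G.
  apply: (sorted_filter ltn_trans); apply: (sorted_filter ltn_trans).
  exact: iota_ltn_sorted.
set M0 := (t.+1 - 2 ^ k.+1) * l.
set R := iota M0 (t * l - M0).
have step1 : 2 ^ k * size G <= \sum_(i <- G) count (fun m => Qc i m) R.
  rewrite -sum1_size big_distrr /= big_seq_cond [X in _ <= X]big_seq_cond.
  apply: leq_sum => i /andP[/hG [ht hk] _].
  rewrite muln1; have [_ _ _ g4] := good_facts ht; have := kf_bounds ht; rewrite hk => /andP[b1 b2].
  apply: leq_trans b1 _; apply: leq_trans g4 _.
  have hs : M0 <= sf i * l by rewrite /M0 leq_mul2r; apply/orP; right; lia.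
  have hs2 : sf i * l <= t * l by rewrite leq_mul2r; apply/orP; right; have [_ g2 _ _] := good_facts ht; lia.
  rewrite /R /Acnt.
  have -> : t * l - M0 = (sf i * l - M0) + (t * l - sf i * l) by lia.
  rewrite iotaD count_cat.
  have -> : M0 + (sf i * l - M0) = sf i * l by lia.
  apply: leq_trans (leq_addl _ _); rewrite leq_eqVlt; apply/orP; left; apply/eqP.
  apply: eq_in_count => m; rewrite mem_iota => /andP[hm _].
  by rewrite /Qc hm.
have step2 : \sum_(i <- G) count (fun m => Qc i m) R = \sum_(m <- R) count (fun i => Qc i m) G.
  rewrite (eq_bigr (fun i => \sum_(m <- R) Qc i m)); last by move=> i _; rewrite count_big.
  rewrite exchange_big; apply: eq_bigr => m _; by rewrite count_big.
have step3 : \sum_(m <- R) count (fun i => Qc i m) G <= 3 * size R.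
  rewrite -sum1_size big_distrr /= leq_sum // => m _; rewrite muln1.
  exact: (chain3 _ sG hG).
have szR : size R <= 2 ^ k.+1 * l.
  rewrite size_iota /M0 -mulnBl leq_mul2r; apply/orP; right; lia.
have : 2 ^ k * size G <= 2 ^ k * (6 * l).
  apply: leq_trans step1 _; rewrite step2; apply: leq_trans step3 _.
  rewrite expnS in szR; lia.
by rewrite leq_pmul2l // expn_gt0.
Qed.

Lemma final_bound : 0 < l -> num_type1 t L <= 6 * l * (trunc_log 2 t).+1.
Proof.
move=> l0; rewrite /num_type1 -size_filter.
rewrite (count_part (f := kf) (K := (trunc_log 2 t).+1)).
  apply: (@leq_trans (\sum_(k < (trunc_log 2 t).+1) 6 * l)).
    by apply: leq_sum => k _; exact: group_bound.
  by rewrite sum_nat_const card_ord mulnC.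
apply/allP => i; rewrite mem_filter => /andP[ht _].
have [_ g2 _ _] := good_facts ht.
rewrite ltnS /kf; apply: leq_trunc_log; lia.
Qed.

End Final.
End Main.

Theorem mainTheorem6 :
  exists C : nat,
    forall (d : Order.disp_t) (T : orderType d) (l : nat) (s : nat -> T)
           (t : nat) (L : seq (@item d T)),
      (0 < l)%N -> run l s t L ->
      (num_type1 t L <= C * l * (trunc_log 2 t).+1)%N.
Proof.
exists 6 => d T l s t L l0 hr.
have [hI hnd] := Inv_run hr.
exact: final_bound hI hnd l0.
Qed.
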